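(* Let $T\in\mathcal{L}(\mathcal{H})$ have closed range and let $n\ge1$. The following are equivalent: (1) $T$ is $n$-hypo-EP; (2) $T^n=T^\dagger T^{n+1}$; (3) $T^nT^\dagger=T^\dagger T^{n+1}T^\dagger$; (4) $(T^* )^n=(T^* )^nT^\dagger T$; (5) there is $c\ge0$ with $\|(T^* )^nx\|\le c\|Tx\|$ for all $x\in\mathcal{H}$; (6) there is $c\ge0$ with $\|(T^* )^nx\|\le c\|\omega(T)x\|$ for all $x\in\mathcal{H}$.
   Context: $\mathcal{H}$ is a Hilbert space, $\mathcal{L}(\mathcal{H})$ the bounded operators on it; $R(\cdot)$ denotes range. For $T$ with closed range, $T^\dagger$ is its Moore–Penrose inverse (unique solution of $TT^\dagger T=T$, $T^\dagger TT^\dagger=T^\dagger$, $(T^\dagger T)^*=T^\dagger T$, $(TT^\dagger)^*=TT^\dagger$), and $\omega(T)=T(T^*T)^\dagger=(T^\dagger)^*$ is its Cauchy dual. For $n\ge1$, $T$ is $n$-hypo-EP if $T$ has closed range and $R(T^n)\subset R(T^* )$. *)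

(* Defs.v *)
From HB Require Import structures.
From mathcomp Require Import all_boot all_order all_algebra.
From mathcomp Require Import all_classical all_reals all_analysis.
From mathcomp Require Import complex.
Set Implicit Arguments. Unset Strict Implicit. Unset Printing Implicit Defensive.
Import Order.TTheory GRing.Theory Num.Theory.
Import numFieldNormedType.Exports.
Local Open Scope ring_scope.
Local Open Scope classical_set_scope.

(* [ip] is an inner product on the complex normed space [V] inducing its
   norm: linear in the first argument, conjugate symmetric, and
   ||x||^2 = <x, x> (which gives positivity/definiteness). *)
Definition is_inner_product (R : realType) (V : normedModType R[i])
  (ip : V -> V -> R[i]) : Prop :=
  [/\ forall y, linear (ip ^~ y),
      forall x y, ip x y = (ip y x)^* &
      forall x, `|x| ^+ 2 = ip x x].

Definition is_Hilbert (R : realType) (V : completeNormedModType R[i])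
  (ip : V -> V -> R[i]) : Prop := is_inner_product ip.

Definition bounded_op (R : realType) (V : normedModType R[i]) (T : V -> V) :
  Prop := linear T /\ continuous T.

Definition is_adjoint (R : realType) (V : normedModType R[i])
  (ip : V -> V -> R[i]) (T Ts : V -> V) : Prop :=
  bounded_op Ts /\ forall x y, ip (T x) y = ip x (Ts y).

Definition closed_range (R : realType) (V : normedModType R[i]) (T : V -> V) :
  Prop := closed (range T).

Definition is_MP_inverse (R : realType) (V : normedModType R[i])
  (ip : V -> V -> R[i]) (T Td : V -> V) : Prop :=
  [/\ bounded_op Td,
      T \o Td \o T = T,
      Td \o T \o Td = Td,
      is_adjoint ip (Td \o T) (Td \o T) &
      is_adjoint ip (T \o Td) (T \o Td)].

Definition n_hypo_EP (R : realType) (V : normedModType R[i]) (n : nat)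
  (T Ts : V -> V) : Prop :=
  closed_range T /\ range (iter n T) `<=` range Ts.

(* Main.v *)
Require Import Defs.
From HB Require Import structures.
From mathcomp Require Import all_boot all_order all_algebra.
From mathcomp Require Import all_classical all_reals all_analysis.
From mathcomp Require Import complex.
Import Order.TTheory GRing.Theory Num.Theory.
Import numFieldNormedType.Exports.
Local Open Scope ring_scope.
Local Open Scope classical_set_scope.
Set Implicit Arguments. Unset Strict Implicit.
Lemma ipB1 (R : realType) (V : normedModType R[i]) (ip : V -> V -> R[i]) :
  is_inner_product ip -> forall u v y, ip (u - v) y = ip u y - ip v y.
Proof.
case=> lin _ _ u v y.
have := lin y (-1) v u; rewrite /= !scaleN1r => h.
by rewrite addrC h addrC.
Qed.

Lemma nondegL (R : realType) (V : normedModType R[i]) (ip : V -> V -> R[i]) :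
  is_inner_product ip -> forall x z, (forall y, ip x y = ip z y) -> x = z.
Proof.
move=> hip x z h; have := hip; case=> _ _ nrm.
apply/eqP; rewrite -subr_eq0 -normr_eq0.
by have := nrm (x - z); rewrite ipB1 // h subrr => /eqP; rewrite expf_eq0.
Qed.

Lemma nondegR (R : realType) (V : normedModType R[i]) (ip : V -> V -> R[i]) :
  is_inner_product ip -> forall y z, (forall x, ip x y = ip x z) -> y = z.
Proof.
move=> hip y z h; have := hip; case=> _ cs _.
apply: (nondegL hip) => x; by rewrite cs h -cs.
Qed.

Lemma linB (R : realType) (V : normedModType R[i]) (f : V -> V) :
  linear f -> forall x y, f (x - y) = f x - f y.
Proof.
move=> lf; pose fL : {linear V -> V} := HB.pack f (GRing.isLinear.Build _ _ _ _ f lf).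
exact: (linearB fL).
Qed.

Lemma opbound (R : realType) (V : normedModType R[i]) (f : V -> V) :
  bounded_op f -> exists c : R[i], 0 <= c /\ forall x, `|f x| <= c * `|x|.
Proof.
case=> lf cf.
pose fL : {linear V -> V} := HB.pack f (GRing.isLinear.Build _ _ _ _ f lf).
have : bounded_near fL (nbhs 0).
  by apply/linear_bounded_continuous.
move/linear_boundedP/pinfty_ex_gt0 => [r r0 H].
by exists r; split; [exact: ltW|].
Qed.

Lemma bop_comp (R : realType) (V : normedModType R[i]) (f g : V -> V) :
  bounded_op f -> bounded_op g -> bounded_op (f \o g).
Proof.
case=> lf cf [lg cg]; split.
  by move=> a u v /=; rewrite lg lf.
by move=> x; apply: continuous_comp; [exact: cg | exact: cf].
Qed.

Lemma bop_iter (R : realType) (V : normedModType R[i]) (f : V -> V) k :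
  bounded_op f -> bounded_op (iter k f).
Proof.
move=> bf; elim: k => [|k IH].
  by split; [move=> a u v | move=> x; exact: cvg_id].
have -> : iter k.+1 f = f \o iter k f by [].
exact: bop_comp.
Qed.

Theorem mainTheorem13 (R : realType) (V : completeNormedModType R[i])
  (ip : V -> V -> R[i]) (T Ts Td W : V -> V) (n : nat) :
  is_Hilbert ip ->
  bounded_op T -> closed_range T -> (1 <= n)%N ->
  is_adjoint ip T Ts -> is_MP_inverse ip T Td -> is_adjoint ip Td W ->
  [<-> n_hypo_EP n T Ts;
       iter n T = Td \o iter n.+1 T;
       iter n T \o Td = Td \o iter n.+1 T \o Td;
       iter n Ts = iter n Ts \o Td \o T;
       exists c : R[i], 0 <= c /\ forall x, `|iter n Ts x| <= c * `|T x|;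
       exists c : R[i], 0 <= c /\ forall x, `|iter n Ts x| <= c * `|W x|].
Proof.
move=> hip bT clT n1 [bTs ipT] [bTd TTdT TdTTd [_ ipQ] [_ ipP]] [bW ipTd].
have tq x : T (Td (T x)) = T x by have := congr1 (fun f => f x) TTdT.
have tdq x : Td (T (Td x)) = Td x by have := congr1 (fun f => f x) TdTTd.
have ipQ' x y : ip (Td (T x)) y = ip x (Td (T y)) by exact: ipQ.
have F1 y : Td (T (Ts y)) = Ts y.
  apply: (nondegR hip) => x; by rewrite -ipQ' -ipT tq ipT.
have F2 y : Td (T y) = Ts (W y).
  apply: (nondegR hip) => x; by rewrite -ipQ' ipTd ipT.
have F3 y : W (Td (T y)) = W y.
  rewrite F2; apply: (nondegR hip) => x.
  by rewrite -ipTd -ipT -ipTd tdq ipTd.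
have F4 k x y : ip (iter k T x) y = ip x (iter k Ts y).
  elim: k x y => [//|k IH] x y.
  by rewrite iterSr IH ipT.
have bTsn := bop_iter n bTs.
have linTsn := bTsn.1.
have P24 : (forall x, iter n T x = Td (T (iter n T x))) ->
           forall x, iter n Ts x = iter n Ts (Td (T x)).
  move=> h x; apply: (nondegR hip) => z.
  by rewrite -F4 h ipQ' F4.
have P42 : (forall x, iter n Ts x = iter n Ts (Td (T x))) ->
           forall x, iter n T x = Td (T (iter n T x)).
  move=> h x; apply: (nondegL hip) => y.
  by rewrite F4 h -F4 ipQ'.
tfae.
- case=> _ hr; apply/funext => x /=.
  have : range (iter n T) (iter n T x) by exists x.
  by move/hr => [y _ <-]; rewrite F1.
- move=> h; apply/funext => x /=; exact: (congr1 (fun f => f (Td x)) h).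
- move=> h.
  have h2 : forall x, iter n T x = Td (T (iter n T x)).
    move=> x; have := congr1 (fun f => f (T x)) h => /=.
    case: n n1 {P24 P42 h bTsn linTsn F4} => [//|m] _.
    by rewrite !iterSr tq.
  by apply/funext => x /=; apply: P24.
- move=> h; have [c [c0 hc]] := opbound (bop_comp bTsn bTd).
  exists c; split => // x.
  by rewrite (congr1 (fun f => f x) h) /=; apply: hc.
- case=> c [c0 hc].
  have h4 x : iter n Ts x = iter n Ts (Td (T x)).
    apply/eqP; rewrite -subr_eq0 -linB // -normr_le0.
    apply: (le_trans (hc _)); rewrite linB; last exact: bT.1.
    by rewrite tq subrr normr0 mulr0.
  have [c' [c0' hc']] := opbound (bop_comp bTsn bTs).
  exists c'; split => // x.
  by rewrite h4 F2; apply: hc'.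
- case=> c [c0 hc].
  have h4 x : iter n Ts x = iter n Ts (Td (T x)).
    apply/eqP; rewrite -subr_eq0 -linB // -normr_le0.
    apply: (le_trans (hc _)); rewrite linB; last exact: bW.1.
    by rewrite F3 subrr normr0 mulr0.
  split => // _ [x _ <-].
  by rewrite P42 // F2; exists (W (iter n T x)).
Qed.
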